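(* Let $f:\mathbb{R}^n\to\mathbb{R}\cup\{+\infty\}$ be a polyhedral M-convex function with bounded $\operatorname{dom}_{\mathbb{R}} f$, $y\in\operatorname{dom}_{\mathbb{R}} f$, and $i,j,k\in N$ pairwise distinct. For every $\lambda>0$ with $\hat y:=y+\lambda(\chi_i-\chi_k)\in\operatorname{dom}_{\mathbb{R}} f$, we have $f'_{\mathbb{R}}(\hat y;i,j)\ge f'_{\mathbb{R}}(y;i,j)$. In particular, if $f'_{\mathbb{R}}(y;i,j)>\phi_{\mathbb{R}}(y)$ then $f'_{\mathbb{R}}(\hat y;i,j)>\phi_{\mathbb{R}}(y)$.
   Context: $N=\{1,\dots,n\}$; $\chi_i$ is the $i$-th unit vector. $\operatorname{dom}_{\mathbb{R}} f=\{x\in\mathbb{R}^n:f(x)<+\infty\}$. A polyhedral convex function $f:\mathbb{R}^n\to\mathbb{R}\cup\{+\infty\}$ (epigraph a polyhedron, $\operatorname{dom}_{\mathbb{R}} f\neq\emptyset$) is M-convex if for all $x,y\in\operatorname{dom}_{\mathbb{R}} f$ and every $i$ with $x(i)>y(i)$ there exist $j$ with $x(j)<y(j)$ and $\epsilon_0>0$ such that $f(x)+f(y)\ge f(x-\epsilon(\chi_i-\chi_j))+f(y+\epsilon(\chi_i-\chi_j))$ for all $\epsilon\in[0,\epsilon_0]$. For $x\in\operatorname{dom}_{\mathbb{R}} f$, $f'_{\mathbb{R}}(x;i,j)=\lim_{\alpha\downarrow0}(f(x+\alpha(\chi_i-\chi_j))-f(x))/\alpha$ (possibly $+\infty$), and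 $\phi_{\mathbb{R}}(x)=\min_{i,j\in N}f'_{\mathbb{R}}(x;i,j)$. *)

(* Defs.v *)
From HB Require Import structures.
From mathcomp Require Import all_boot all_order all_algebra.
From mathcomp Require Import all_classical all_reals all_analysis.
Set Implicit Arguments. Unset Strict Implicit. Unset Printing Implicit Defensive.
Import Order.TTheory GRing.Theory Num.Theory.
Import numFieldNormedType.Exports.
Local Open Scope classical_set_scope.
Local Open Scope ring_scope.

Definition chi {R : realType} {n : nat} (i : 'I_n) : 'I_n -> R :=
  fun l => (l == i)%:R.

Definition move {R : realType} {n : nat} (x : 'I_n -> R) (a : R) (i j : 'I_n)
  : 'I_n -> R := fun l => x l + a * (chi i l - chi j l).

Definition domR {R : realType} {n : nat} (f : ('I_n -> R) -> \bar R) :=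
  [set x | (f x < +oo)%E].

Definition polyhedron {R : realType} {n : nat} (P : set (('I_n -> R) * R)) :=
  exists (m : nat) (a : 'I_m -> 'I_n -> R) (c b : 'I_m -> R),
    P = [set p | forall l : 'I_m, \sum_(q < n) a l q * p.1 q + c l * p.2 <= b l].

Definition epigraph {R : realType} {n : nat} (f : ('I_n -> R) -> \bar R) :=
  [set p : ('I_n -> R) * R | (f p.1 <= p.2%:E)%E].

Definition polyhedral_convex {R : realType} {n : nat} (f : ('I_n -> R) -> \bar R) :=
  (forall x, f x != -oo%E) /\ polyhedron (epigraph f) /\ domR f !=set0.

Definition Mconvex {R : realType} {n : nat} (f : ('I_n -> R) -> \bar R) :=
  polyhedral_convex f /\
  forall x y, domR f x -> domR f y -> forall i : 'I_n, y i < x i ->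
    exists j : 'I_n, x j < y j /\
      exists2 e0 : R, 0 < e0 & forall e : R, 0 <= e <= e0 ->
        (f (move x (- e) i j) + f (move y e i j) <= f x + f y)%E.

Definition dirder {R : realType} {n : nat} (f : ('I_n -> R) -> \bar R)
  (x : 'I_n -> R) (i j : 'I_n) : \bar R :=
  lim ((fun alpha : R => ((f (move x alpha i j) - f x) * (alpha^-1)%:E)%E)
        @ 0^'+).

Definition phiR {R : realType} {n : nat} (f : ('I_n -> R) -> \bar R)
  (x : 'I_n -> R) : \bar R :=
  \big[mine/+oo%E]_(p : 'I_n * 'I_n) dirder f x p.1 p.2.

Definition bounded_dom {R : realType} {n : nat} (f : ('I_n -> R) -> \bar R) :=
  exists M : R, forall x, domR f x -> forall l, `|x l| <= M.

(* Main.v *)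
Require Import Defs.
From HB Require Import structures.
From mathcomp Require Import all_boot all_order all_algebra.
From mathcomp Require Import all_classical all_reals all_analysis.
From mathcomp Require Import ring lra.
Import Order.TTheory GRing.Theory Num.Theory.
Local Open Scope classical_set_scope.
Local Open Scope ring_scope.
Set Implicit Arguments. Unset Strict Implicit. Unset Printing Implicit Defensive.

Definition Ax {R : realType} {n m : nat} (a : 'I_m -> 'I_n -> R) (l : 'I_m)
  (x : 'I_n -> R) : R := \sum_(q < n) a l q * x q.

Lemma sum_chi {R : realType} {n : nat} (u : 'I_n -> R) (i : 'I_n) :
  \sum_(q < n) u q * chi i q = u i.
Proof.
rewrite (bigD1 i) //= /chi eqxx mulr1 big1 ?addr0 // => q /negbTE ->.
by rewrite mulr0.
Qed.

Lemma Ax_move {R : realType} {n m : nat} (a : 'I_m -> 'I_n -> R) l x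
  (al : R) (i j : 'I_n) :
  Ax a l (move x al i j) = Ax a l x + al * (a l i - a l j).
Proof.
rewrite /Ax /move.
under eq_bigr do rewrite mulrDr.
rewrite big_split /=; congr (_ + _).
under eq_bigr do rewrite mulrCA mulrBr.
rewrite -mulr_sumr big_split /= sumrN !sum_chi.
by [].
Qed.

Lemma chi_val {R : realType} {n : nat} (i q : 'I_n) :
  chi i q = (if q == i then 1 else 0 : R).
Proof. by rewrite /chi; case: (q == i). Qed.

Definition hp {R : realType} {n m : nat} (a : 'I_m -> 'I_n -> R) (c b : 'I_m -> R)
  l (x : 'I_n -> R) : R := (b l - Ax a l x) / c l.

Definition sl {R : realType} {n m : nat} (a : 'I_m -> 'I_n -> R) (c : 'I_m -> R)
  l (i j : 'I_n) : R := (a l j - a l i) / c l.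

Lemma hp_move {R : realType} {n m : nat} (a : 'I_m -> 'I_n -> R) c b l x al i j :
  hp a c b l (move x al i j) = hp a c b l x + al * sl a c l i j.
Proof.
rewrite /hp /sl Ax_move mulrA -mulrDl; congr (_ / _).
rewrite opprD addrA mulrBr; congr (_ + _); rewrite mulrBr opprB.
by [].
Qed.

Definition erep {R : realType} {n m : nat} (f : ('I_n -> R) -> \bar R)
  (a : 'I_m -> 'I_n -> R) (c b : 'I_m -> R) :=
  epigraph f = [set p | forall l : 'I_m, \sum_(q < n) a l q * p.1 q + c l * p.2 <= b l].

Lemma epiP {R : realType} {n m : nat} (f : ('I_n -> R) -> \bar R) a c b :
  @erep R n m f a c b -> forall x r,
  (f x <= r%:E)%E <-> (forall l, Ax a l x + c l * r <= b l).
Proof.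
move=> H x r; have := congr1 (fun S => S (x, r)) H; rewrite /epigraph /= => E.
by rewrite -/(is_true _) E.
Qed.

Lemma hp_le {R : realType} {n m : nat} (a : 'I_m -> 'I_n -> R) c b l x r :
  c l < 0 -> (Ax a l x + c l * r <= b l) <-> (hp a c b l x <= r).
Proof.
move=> cl; rewrite /hp ler_ndivrMr //.
split => H; lra.
Qed.

Lemma fin_ex {R : realType} (u : \bar R) : u != -oo%E -> (u < +oo)%E ->
  exists r, u = r%:E.
Proof. by case: u => // r _ _; exists r. Qed.

Lemma c_nonpos {R : realType} {n m : nat} (f : ('I_n -> R) -> \bar R) a c b x0 :
  (forall x, f x != -oo%E) -> @erep R n m f a c b -> domR f x0 ->
  forall l, c l <= 0.
Proof.
move=> Hn He Hd l; rewrite leNgt; apply/negP => cl.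
have [r0 Hr0] := fin_ex (Hn x0) Hd.
pose T := Num.max r0 ((b l - Ax a l x0 + 1) / c l).
have : (f x0 <= T%:E)%E by rewrite Hr0 lee_fin le_max lexx.
move/(epiP He) => /(_ l).
have : (b l - Ax a l x0 + 1) / c l <= T by rewrite le_max lexx orbT.
rewrite -(ler_pM2l cl) mulrCA divff ?mulr1 ?gt_eqF //.
move=> h1 h2; lra.
Qed.

Lemma dom_char {R : realType} {n m : nat} (f : ('I_n -> R) -> \bar R) a c b x0 :
  (forall x, f x != -oo%E) -> @erep R n m f a c b -> domR f x0 ->
  forall x, domR f x <-> (forall l, c l = 0 -> Ax a l x <= b l).
Proof.
move=> Hn He Hd x; split.
  move=> Hx l cl0; have [r Hr] := fin_ex (Hn x) Hx.
  have : (f x <= r%:E)%E by rewrite Hr.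
  by move/(epiP He) => /(_ l); rewrite cl0 mul0r addr0.
move=> H.
pose r := \big[Num.max/0]_(l | c l < 0) hp a c b l x.
have : (f x <= r%:E)%E.
  apply/(epiP He) => l.
  have := c_nonpos Hn He Hd l; rewrite le_eqVlt => /orP [/eqP cl|cl].
    by rewrite cl mul0r addr0; apply: H.
  by apply/(hp_le _ _ _ _ cl); apply: (le_bigmax_cond _ (P := fun l => c l < 0)).
move=> h; rewrite /domR /=; exact: (le_lt_trans h (ltey _)).
Qed.

Lemma fge {R : realType} {n m : nat} (f : ('I_n -> R) -> \bar R) a c b :
  (forall x, f x != -oo%E) -> @erep R n m f a c b ->
  forall l x, c l < 0 -> ((hp a c b l x)%:E <= f x)%E.
Proof.
move=> Hn He l x cl; move: (Hn x); case E: (f x) => [r| |] // _; last exact: leey.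
have : (f x <= r%:E)%E by rewrite E.
by move/(epiP He) => /(_ l) /(hp_le _ _ _ _ cl); rewrite lee_fin.
Qed.

Lemma fval {R : realType} {n m : nat} (f : ('I_n -> R) -> \bar R) a c b x0 :
  (forall x, f x != -oo%E) -> @erep R n m f a c b -> domR f x0 ->
  forall x V l0, (forall l, c l = 0 -> Ax a l x <= b l) ->
  (forall l, c l < 0 -> hp a c b l x <= V) -> c l0 < 0 -> hp a c b l0 x = V ->
  f x = V%:E.
Proof.
move=> Hn He Hd x V l0 H0 H1 cl0 hl0.
have HV : (f x <= V%:E)%E.
  apply/(epiP He) => l.
  have := c_nonpos Hn He Hd l; rewrite le_eqVlt => /orP [/eqP cl|cl].
    by rewrite cl mul0r addr0; apply: H0.
  by apply/(hp_le _ _ _ _ cl); apply: H1.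
apply/le_anti; rewrite HV /=.
by rewrite -hl0; apply: fge.
Qed.

Lemma fact_act {R : realType} {n m : nat} (f : ('I_n -> R) -> \bar R) a c b x0 :
  (forall x, f x != -oo%E) -> @erep R n m f a c b -> domR f x0 ->
  forall x, domR f x -> exists l, c l < 0 /\ (hp a c b l x)%:E = f x.
Proof.
move=> Hn He Hd x Hx; have [r Hr] := fin_ex (Hn x) Hx.
apply/not_existsP => Hno.
have Hlt : forall l, c l < 0 -> hp a c b l x < r.
  move=> l cl; have := fge Hn He x cl; rewrite Hr lee_fin le_eqVlt => /orP [/eqP E|//].
  by exfalso; apply: (Hno l); split => //; rewrite E Hr.
pose V := \big[Num.max/(r - 1)]_(l | c l < 0) hp a c b l x.
have HVr : V < r by apply: bigmax_lt => //; lra.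
have : (f x <= V%:E)%E.
  apply/(epiP He) => l.
  have := c_nonpos Hn He Hd l; rewrite le_eqVlt => /orP [/eqP cl|cl].
    rewrite cl mul0r addr0; have := (dom_char Hn He Hd x).1 Hx l cl; by [].
  by apply/(hp_le _ _ _ _ cl); apply: (le_bigmax_cond _ (P := fun l => c l < 0)).
by rewrite Hr lee_fin => h; have := lt_le_trans HVr h; rewrite ltxx.
Qed.

Lemma gap {R : realType} {m : nat} (P : pred 'I_m) (u v : 'I_m -> R) :
  (forall l, P l -> u l < 0) ->
  exists2 eta, 0 < eta & forall x, `|x| < eta -> forall l, P l -> u l + x * v l < 0.
Proof.
move=> Hu.
pose e l := - u l / (1 + `|v l|).
have epos : forall l, P l -> 0 < e l.
  move=> l Pl; apply: divr_gt0; first by have := Hu l Pl; lra.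
  by have := normr_ge0 (v l); lra.
exists (\big[Num.min/1]_(l | P l) e l).
  by apply: lt_bigmin => //; exact: ltr01.
move=> x hx l Pl.
have h1 : \big[Num.min/1]_(l | P l) e l <= e l by apply: bigmin_le_cond.
have h2 : e l * (1 + `|v l|) = - u l.
  by rewrite /e divfK // gt_eqF //; have := normr_ge0 (v l); lra.
have h3 : x * v l <= `|x| * `|v l| by rewrite -normrM ler_norm.
have h4 : `|x| * `|v l| <= e l * `|v l|.
  by apply: ler_wpM2r; [exact: normr_ge0 | lra].
have := epos l Pl; have := Hu l Pl.
move: h2 h3 h4; set w := `|v l|; set E := e l; set X := x * v l; set Y := `|x| * w.
move=> h2 h3 h4 h5 h6.
have : E * w = - u l - E by rewrite -h2; ring.
move=> h7. lra.
Qed.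

Lemma argmax_ex {R : realType} {m : nat} (P : pred 'I_m) (F : 'I_m -> R) l0 :
  P l0 -> exists l, P l /\ forall l', P l' -> F l' <= F l.
Proof. by move=> H; case: (arg_maxP F H) => l Pl Hl; exists l. Qed.

Lemma near0P {R : realType} (P : R -> Prop) eta : 0 < eta ->
  (forall al, 0 < al -> al < eta -> P al) -> \forall al \near (0:R)^'+, P al.
Proof.
move=> he H; near=> al; apply: H.
- by near: al; exact: nbhs_right_gt.
- by near: al; exact: nbhs_right_lt.
Unshelve. all: by end_near.
Qed.

Lemma not_dom_inf {R : realType} {n : nat} (f : ('I_n -> R) -> \bar R) x :
  ~ domR f x -> f x = +oo%E.
Proof.
move=> H; apply/eqP; rewrite eq_le leey /=; rewrite leNgt; apply/negP => h; exact: H.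
Qed.

Lemma dv_blk {R : realType} {n m : nat} (f : ('I_n -> R) -> \bar R) a c b x0 :
  (forall x, f x != -oo%E) -> @erep R n m f a c b -> domR f x0 ->
  forall x i j, domR f x ->
  (exists l, c l = 0 /\ Ax a l x = b l /\ 0 < a l i - a l j) ->
  dirder f x i j = +oo%E.
Proof.
move=> Hn He Hd x i j Hx [l [cl [Hl Hp]]].
have [r Hr] := fin_ex (Hn x) Hx.
rewrite /dirder; apply: lim_near_cst; first exact: ereal_hausdorff.
apply: (@near0P _ _ 1) => // al al0 _.
have -> : f (move x al i j) = +oo%E.
  apply: not_dom_inf => /(dom_char Hn He Hd) /(_ l cl).
  rewrite Ax_move Hl => h.
  have : 0 < al * (a l i - a l j) by apply: mulr_gt0.
  lra.
rewrite Hr addye // gt0_mulye // lte_fin invr_gt0 //.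
Qed.

Lemma dv_fin {R : realType} {n m : nat} (f : ('I_n -> R) -> \bar R) a c b x0 :
  (forall x, f x != -oo%E) -> @erep R n m f a c b -> domR f x0 ->
  forall x i j l0, domR f x ->
  (forall l, c l = 0 -> Ax a l x = b l -> a l i - a l j <= 0) ->
  c l0 < 0 -> (hp a c b l0 x)%:E = f x ->
  (forall l, c l < 0 -> (hp a c b l x)%:E = f x -> sl a c l i j <= sl a c l0 i j) ->
  dirder f x i j = (sl a c l0 i j)%:E.
Proof.
move=> Hn He Hd x i j l0 Hx Hnb cl0 Hl0 Hmax.
set r := hp a c b l0 x.
have [e1 e1p H1] := gap (P := fun l => (c l == 0) && (Ax a l x < b l))
   (u := fun l => Ax a l x - b l) (fun l => a l i - a l j)
   ltac:(move=> l /andP [_ h]; lra).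
have [e2 e2p H2] := gap (P := fun l => (c l < 0) && (hp a c b l x < r))
   (u := fun l => hp a c b l x - r) (fun l => sl a c l i j - sl a c l0 i j)
   ltac:(move=> l /andP [_ h]; lra).
rewrite /dirder; apply: lim_near_cst; first exact: ereal_hausdorff.
apply: (@near0P _ _ (Num.min e1 e2)); first by rewrite lt_min e1p e2p.
move=> al al0; rewrite lt_min => /andP [a1 a2].
have nal : `|al| = al by rewrite ger0_norm // ltW.
have -> : f (move x al i j) = (r + al * sl a c l0 i j)%:E.
  apply: (fval Hn He Hd (l0 := l0)) => //.
  - move=> l cl; rewrite Ax_move.
    have := (dom_char Hn He Hd x).1 Hx l cl; rewrite le_eqVlt => /orP [/eqP E|E].
      have := Hnb l cl E; rewrite E => h.
      have : al * (a l i - a l j) <= 0 by apply: mulr_ge0_le0 => //; exact: ltW.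
      lra.
    have := H1 al ltac:(by rewrite nal) l; rewrite cl eqxx E => /(_ isT) h; lra.
  - move=> l cl; rewrite hp_move.
    have := fge Hn He x cl; rewrite -Hl0 lee_fin le_eqVlt => /orP [/eqP E|E].
      have := Hmax l cl; rewrite E => /(_ Hl0) h.
      have : al * sl a c l i j <= al * sl a c l0 i j by apply: ler_wpM2l => //; exact: ltW.
      rewrite /r; lra.
    have := H2 al ltac:(by rewrite nal) l; rewrite cl E => /(_ isT) h.
    rewrite /r in h *; lra.
  - by rewrite hp_move.
rewrite -Hl0 -EFinD -EFinM; congr (_%:E).
rewrite addrC addKr mulrAC divff ?mul1r //; exact: lt0r_neq0.
Qed.

Definition Mex {R : realType} {n : nat} (f : ('I_n -> R) -> \bar R) :=
  forall x y, domR f x -> domR f y -> forall i : 'I_n, y i < x i ->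
    exists j : 'I_n, x j < y j /\
      exists2 e0 : R, 0 < e0 & forall e : R, 0 <= e <= e0 ->
        (f (move x (- e) i j) + f (move y e i j) <= f x + f y)%E.

Lemma exch_jk {R : realType} {n : nat} (f : ('I_n -> R) -> \bar R) (i j k : 'I_n) :
  Mex f -> i != j -> j != k -> i != k ->
  forall z p q, 0 <= p -> 0 <= q -> 0 < p + q ->
  domR f z -> domR f (move (move z p i j) q i k) ->
  exists2 e0, 0 < e0 &
   ((f (move (move (move z p i j) q i k) (- e0) i j) + f (move z e0 i j)
      <= f (move (move z p i j) q i k) + f z)%E \/
    (f (move (move (move z p i j) q i k) (- e0) i k) + f (move z e0 i k)
      <= f (move (move z p i j) q i k) + f z)%E).
Proof.
move=> Hex ij jk ik z p q p0 q0 pq Hz HX.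
have Xv : forall l, move (move z p i j) q i k l =
   z l + p * (chi i l - chi j l) + q * (chi i l - chi k l) by [].
have Hi : z i < move (move z p i j) q i k i.
  by rewrite Xv !chi_val (negbTE ij) (negbTE ik) (@eqxx _ i); clear -pq; lra.
have [j' [Hj' [e0 e0p He0]]] := Hex _ _ HX Hz i Hi.
exists e0 => //.
have H0 : 0 <= e0 <= e0 by rewrite lexx ltW.
move: Hj'; rewrite Xv !chi_val.
case: (eqVneq j' i) => [->|ji].
  by rewrite (negbTE ij) (negbTE ik) => h; exfalso; move: h; clear -pq; lra.
case: (eqVneq j' j) => [Ej|jj]; first by move=> _; left; move: (He0 e0 H0); rewrite Ej.
case: (eqVneq j' k) => [Ek|jk']; first by move=> _; right; move: (He0 e0 H0); rewrite Ek.
by move=> h; exfalso; move: h; clear; lra.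
Qed.

Lemma z_dom {R : realType} {n m : nat} (f : ('I_n -> R) -> \bar R) a c b :
  (forall x, f x != -oo%E) -> @erep R n m f a c b ->
  forall y (i k : 'I_n) lam t, domR f y -> domR f (move y lam i k) -> 0 <= t <= lam ->
  domR f (move y t i k).
Proof.
move=> Hn He y i k lam t Hy Hl /andP [t0 tl].
apply/(dom_char Hn He Hy) => l cl.
have := (dom_char Hn He Hy y).1 Hy l cl; have := (dom_char Hn He Hy _).1 Hl l cl.
rewrite !Ax_move; set d := a l i - a l k => h1 h2.
case: (leP d 0) => hd.
  have : t * d <= 0 by apply: mulr_ge0_le0.
  lra.
have : t * d <= lam * d by apply: ler_wpM2r => //; exact: ltW.
lra.
Qed.

Lemma sum_bound {R : realType} (u1 u2 v : R) (w1 w2 : \bar R) :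
  (u1%:E <= w1)%E -> (u2%:E <= w2)%E -> (w1 + w2 <= v%:E)%E -> u1 + u2 <= v.
Proof.
move=> h1 h2 h3; rewrite -lee_fin EFinD; apply: le_trans h3; exact: leeD.
Qed.

Lemma inf_contra {R : realType} (w1 w2 : \bar R) (v : R) :
  w1 != -oo%E -> w2 != -oo%E -> (w1 = +oo%E \/ w2 = +oo%E) ->
  (w1 + w2 <= v%:E)%E -> False.
Proof.
move=> h1 h2 [->|->]; [rewrite addye // | rewrite addey //].
all: by rewrite leNgt ltey.
Qed.

Lemma fail_dom {R : realType} {n m : nat} (f : ('I_n -> R) -> \bar R) a c b x0
  (i j k : 'I_n) :
  (forall x, f x != -oo%E) -> @erep R n m f a c b -> domR f x0 ->
  Mex f -> i != j -> j != k -> i != k ->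
  forall z0, domR f z0 ->
  (forall l, c l = 0 -> Ax a l z0 = b l -> a l i - a l k <= 0) ->
  (exists l, c l = 0 /\ Ax a l z0 = b l /\ 0 < a l i - a l j) ->
  (forall l, c l = 0 -> Ax a l z0 = b l -> 0 < a l i - a l j -> a l i - a l k != 0) ->
  False.
Proof.
move=> Hn He Hd Hex ij jk ik z0 Hz Tk [l1 [cl1 [tl1 pl1]]] Hne.
pose P l := (c l == 0) && (Ax a l z0 == b l) && (0 < a l i - a l j).
pose rho l := (a l k - a l i) / (a l i - a l j).
have Pl1 : P l1.
  by rewrite /P; apply/andP; split; [apply/andP; split; apply/eqP | exact: pl1].
have [ls [Pls Hls]] := argmax_ex (fun l => - rho l) Pl1.
move: Pls; rewrite /P => /andP [/andP [/eqP cls /eqP tls] pls].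
have kls : a ls i - a ls k < 0.
  have := Tk ls cls tls; have := Hne ls cls tls pls; rewrite le_eqVlt => /negbTE -> //.
have rhop : 0 < rho ls by apply: divr_gt0 => //; lra.
have rhoE : rho ls * (a ls i - a ls j) = a ls k - a ls i by rewrite /rho divfK // gt_eqF.
have [eta etap Hg] := gap (P := fun l => (c l == 0) && (Ax a l z0 < b l))
   (u := fun l => Ax a l z0 - b l) (fun l => rho ls * (a l i - a l j) + (a l i - a l k))
   ltac:(move=> l /andP [_ h]; lra).
pose eps := eta / 2.
have epsp : 0 < eps by rewrite /eps divr_gt0.
have epsl : `|eps| < eta by rewrite gtr0_norm // /eps; lra.
set X := move (move z0 (eps * rho ls) i j) eps i k.
have AX : forall l, Ax a l X = Ax a l z0 + eps * (rho ls * (a l i - a l j) + (a l i - a l k)).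
  by move=> l; rewrite /X !Ax_move; ring.
have HX : domR f X.
  apply/(dom_char Hn He Hd) => l cl; rewrite AX.
  have := (dom_char Hn He Hd z0).1 Hz l cl; rewrite le_eqVlt => /orP [/eqP E|E].
    have : rho ls * (a l i - a l j) + (a l i - a l k) <= 0.
      case: (ltP 0 (a l i - a l j)) => hij.
        have := Hls l; rewrite /P cl E !eqxx hij => /(_ isT) h.
        have : rho ls <= rho l by lra.
        rewrite /rho ler_pdivlMr // => h2.
        have : (a l k - a l i) / (a l i - a l j) * (a l i - a l j) = a l k - a l i.
          by rewrite divfK // gt_eqF.
        move=> h3; move: h2; rewrite (mulrC _ (a l i - a l j)).
        move=> h2; clear -h2 h3 hij rhop; nra.
      have := Tk l cl E; move=> h.
      have : rho ls * (a l i - a l j) <= 0 by apply: mulr_ge0_le0 => //; exact: ltW.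
      lra.
    move=> h; have : eps * (rho ls * (a l i - a l j) + (a l i - a l k)) <= 0.
      by apply: mulr_ge0_le0 => //; exact: ltW.
    lra.
  have := Hg eps epsl l; rewrite cl eqxx E => /(_ isT); lra.
have [e0 e0p [H|H]] := exch_jk Hex ij jk ik (z := z0) (p := eps * rho ls) (q := eps)
  ltac:(by apply: mulr_ge0; apply: ltW) ltac:(exact: ltW)
  ltac:(have := mulr_gt0 epsp rhop; lra) Hz HX.
- have [r1 Hr1] := fin_ex (Hn X) HX; have [r2 Hr2] := fin_ex (Hn z0) Hz.
  move: H; rewrite -/X Hr1 Hr2 -EFinD; apply: inf_contra; try exact: Hn.
  right; apply: not_dom_inf => /(dom_char Hn He Hd) /(_ ls cls).
  rewrite Ax_move tls => h; have := mulr_gt0 e0p pls; lra.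
- have [r1 Hr1] := fin_ex (Hn X) HX; have [r2 Hr2] := fin_ex (Hn z0) Hz.
  move: H; rewrite -/X Hr1 Hr2 -EFinD; apply: inf_contra; try exact: Hn.
  left; apply: not_dom_inf => /(dom_char Hn He Hd) /(_ ls cls).
  rewrite Ax_move AX tls rhoE => h.
  have : 0 < - e0 * (a ls i - a ls k) by rewrite mulNr oppr_gt0 pmulr_rlt0.
  lra.
Qed.

Lemma fail_piece {R : realType} {n m : nat} (f : ('I_n -> R) -> \bar R) a c b x0
  (i j k : 'I_n) :
  (forall x, f x != -oo%E) -> @erep R n m f a c b -> domR f x0 ->
  Mex f -> i != j -> j != k -> i != k ->
  forall z0, domR f z0 ->
  (forall l, c l = 0 -> Ax a l z0 = b l -> a l i - a l k <= 0) ->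
  (forall l, c l = 0 -> Ax a l z0 = b l -> a l i - a l j <= 0) ->
  forall lg ld, c lg < 0 -> (hp a c b lg z0)%:E = f z0 ->
  (forall l, c l < 0 -> (hp a c b l z0)%:E = f z0 -> sl a c l i j <= sl a c lg i j) ->
  c ld < 0 -> (hp a c b ld z0)%:E = f z0 ->
  (forall l, c l < 0 -> (hp a c b l z0)%:E = f z0 -> sl a c l i k <= sl a c ld i k) ->
  (forall l, c l < 0 -> (hp a c b l z0)%:E = f z0 ->
     sl a c l i j = sl a c lg i j -> sl a c l i k = sl a c ld i k -> False) ->
  False.
Proof.
move=> Hn He Hd Hex ij jk ik z0 Hz Tk Hnb lg ld clg Hlg Hmg cld Hld Hmd Hno.
set r := hp a c b lg z0.
have Hr : f z0 = r%:E by rewrite -Hlg.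
have AE : forall l, ((hp a c b l z0)%:E = f z0) <-> hp a c b l z0 = r.
  by move=> l; rewrite Hr; split => [[]|->].
set G := sl a c lg i j; set D := sl a c ld i k.
pose A l := (c l < 0) && (hp a c b l z0 == r).
have AP : forall l, A l -> c l < 0 /\ (hp a c b l z0)%:E = f z0.
  by move=> l /andP [h /eqP e]; split => //; apply/AE.
have PA : forall l, c l < 0 -> (hp a c b l z0)%:E = f z0 -> A l.
  by move=> l h e; apply/andP; split => //; apply/eqP/AE.
have Pag : A lg && (sl a c lg i j == G) by rewrite PA // eqxx.
have [la [/andP [Ala /eqP Gla] Hla]] := argmax_ex (P := fun l => A l && (sl a c l i j == G)) (fun l => sl a c l i k) Pag.
have Pbd : A ld && (sl a c ld i k == D) by rewrite PA // eqxx.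
have [lb [/andP [Alb /eqP Dlb] Hlb]] := argmax_ex (P := fun l => A l && (sl a c l i k == D)) (fun l => sl a c l i j) Pbd.
have [cla Hla'] := AP la Ala; have [clb Hlb'] := AP lb Alb.
have dla : sl a c la i k < D.
  have := Hmd la cla Hla'; rewrite le_eqVlt => /orP [/eqP E|//].
  by exfalso; apply: (Hno la).
have glb : sl a c lb i j < G.
  have := Hmg lb clb Hlb'; rewrite le_eqVlt => /orP [/eqP E|//].
  by exfalso; apply: (Hno lb).
set p := D - sl a c la i k; set q := G - sl a c lb i j.
have pp : 0 < p by rewrite /p; lra.
have qp : 0 < q by rewrite /q; lra.
pose val l := p * sl a c l i j + q * sl a c l i k.
have vab : val la = val lb by rewrite /val Gla Dlb /p /q; ring.
have hla : hp a c b la z0 = r by apply/AE.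
have hlb : hp a c b lb z0 = r by apply/AE.
have [e1 e1p H1] := gap (P := fun l => (c l == 0) && (Ax a l z0 < b l))
   (u := fun l => Ax a l z0 - b l) (fun l => p * (a l i - a l j) + q * (a l i - a l k))
   ltac:(move=> l /andP [_ h]; lra).
have [e2 e2p H2] := gap (P := fun l => (c l < 0) && (hp a c b l z0 < r))
   (u := fun l => hp a c b l z0 - r) (fun l => val l - val la)
   ltac:(move=> l /andP [_ h]; lra).
pose eps := Num.min e1 e2 / 2.
have epsp : 0 < eps by rewrite /eps divr_gt0 // lt_min e1p e2p.
have epsl1 : `|eps| < e1.
  rewrite gtr0_norm // /eps.
  have : Num.min e1 e2 <= e1 by rewrite ge_min lexx.
  have : 0 < Num.min e1 e2 by rewrite lt_min e1p e2p.
  lra.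
have epsl2 : `|eps| < e2.
  rewrite gtr0_norm // /eps.
  have : Num.min e1 e2 <= e2 by rewrite ge_min lexx orbT.
  have : 0 < Num.min e1 e2 by rewrite lt_min e1p e2p.
  lra.
set X := move (move z0 (eps * p) i j) (eps * q) i k.
have AX : forall l, Ax a l X = Ax a l z0 + eps * (p * (a l i - a l j) + q * (a l i - a l k)).
  by move=> l; rewrite /X !Ax_move; ring.
have hX : forall l, hp a c b l X = hp a c b l z0 + eps * val l.
  by move=> l; rewrite /X !hp_move /val; ring.
have HX : domR f X.
  apply/(dom_char Hn He Hd) => l cl; rewrite AX.
  have := (dom_char Hn He Hd z0).1 Hz l cl; rewrite le_eqVlt => /orP [/eqP E|E].
    have h1 := Hnb l cl E; have h2 := Tk l cl E.
    have : p * (a l i - a l j) <= 0 by apply: mulr_ge0_le0 => //; exact: ltW.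
    have : q * (a l i - a l k) <= 0 by apply: mulr_ge0_le0 => //; exact: ltW.
    move=> h3 h4.
    have : eps * (p * (a l i - a l j) + q * (a l i - a l k)) <= 0.
      by apply: mulr_ge0_le0; [exact: ltW | lra].
    lra.
  have := H1 eps epsl1 l; rewrite cl eqxx E => /(_ isT); lra.
have [lc [clc Hlc]] := fact_act Hn He Hd HX.
have HcX : forall l, c l < 0 -> hp a c b l X <= hp a c b lc X.
  by move=> l cl; rewrite -lee_fin Hlc; apply: fge.
have hlc : hp a c b lc z0 = r.
  have := fge Hn He z0 clc; rewrite Hr lee_fin le_eqVlt => /orP [/eqP //|E].
  exfalso.
  have := H2 eps epsl2 lc; rewrite clc E => /(_ isT) h.
  have := HcX la cla; rewrite !hX hla => h'; lra.
have valmax : forall l, A l -> val l <= val lc.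
  move=> l /andP [cl /eqP hl]; have := HcX l cl; rewrite !hX hl hlc => h.
  have : eps * val l <= eps * val lc by lra.
  by rewrite ler_pM2l.
have [e0 e0p [H|H]] := exch_jk Hex ij jk ik (z := z0) (p := eps * p) (q := eps * q)
  ltac:(by apply: mulr_ge0; apply: ltW) ltac:(by apply: mulr_ge0; apply: ltW)
  ltac:(have := mulr_gt0 epsp pp; have := mulr_gt0 epsp qp; lra) Hz HX.
- have [l1 [cl1 [h1 g1]]] : exists l1, c l1 < 0 /\ hp a c b l1 X = hp a c b lc X /\
     sl a c l1 i j < G.
    have := Hmg lc clc (proj2 (AE lc) hlc); rewrite le_eqVlt => /orP [/eqP E|E].
      exists lb; split => //; split => //.
      have Pc : A lc && (sl a c lc i j == G) by rewrite PA ?E ?eqxx //; exact/AE.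
      have := Hla lc Pc => h.
      have : val lc <= val la by rewrite /val E Gla; have := ltW qp; nra.
      have := valmax la Ala => h2 h3.
      by rewrite !hX hlb hlc -vab; congr (_ + _ * _); lra.
    by exists lc.
  have w1 : ((hp a c b l1 X - e0 * sl a c l1 i j)%:E <= f (move X (- e0) i j))%E.
    by rewrite -mulNr -hp_move; apply: fge.
  have w2 : ((r + e0 * G)%:E <= f (move z0 e0 i j))%E.
    by rewrite /r /G -hp_move; apply: fge.
  move: H; rewrite -/X -Hlc Hr -EFinD => H; have := sum_bound w1 w2 H.
  rewrite h1 => h; have : e0 * (G - sl a c l1 i j) <= 0 by lra.
  rewrite pmulr_rle0 //; lra.
- have [l2 [cl2 [h1 g1]]] : exists l2, c l2 < 0 /\ hp a c b l2 X = hp a c b lc X /\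
     sl a c l2 i k < D.
    have := Hmd lc clc (proj2 (AE lc) hlc); rewrite le_eqVlt => /orP [/eqP E|E].
      exists la; split => //; split => //.
      have Pc : A lc && (sl a c lc i k == D) by rewrite PA ?E ?eqxx //; exact/AE.
      have := Hlb lc Pc => h.
      have : val lc <= val lb by rewrite /val E Dlb; have := ltW pp; nra.
      have := valmax lb Alb => h2 h3.
      by rewrite !hX hla hlc vab; congr (_ + _ * _); lra.
    by exists lc.
  have w1 : ((hp a c b l2 X - e0 * sl a c l2 i k)%:E <= f (move X (- e0) i k))%E.
    by rewrite -mulNr -hp_move; apply: fge.
  have w2 : ((r + e0 * D)%:E <= f (move z0 e0 i k))%E.
    have hld : hp a c b ld z0 = r by apply/AE.
    by rewrite -hld /D -hp_move; apply: fge.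
  move: H; rewrite -/X -Hlc Hr -EFinD => H; have := sum_bound w1 w2 H.
  rewrite h1 => h; have : e0 * (D - sl a c l2 i k) <= 0 by lra.
  rewrite pmulr_rle0 //; lra.
Qed.

Lemma D_exact {R : realType} {n m : nat} (f : ('I_n -> R) -> \bar R) a c b x0 :
  (forall x, f x != -oo%E) -> @erep R n m f a c b -> domR f x0 ->
  forall x (i j : 'I_n) l0, domR f x ->
  (forall l, c l = 0 -> Ax a l x = b l -> a l i - a l j <= 0) ->
  c l0 < 0 -> (hp a c b l0 x)%:E = f x ->
  exists l, [/\ c l < 0, (hp a c b l x)%:E = f x,
    (forall l', c l' < 0 -> (hp a c b l' x)%:E = f x -> sl a c l' i j <= sl a c l i j)
    & dirder f x i j = (sl a c l i j)%:E].
Proof.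
move=> Hn He Hd x i j l0 Hx Hnb cl0 hl0.
pose A l := (c l < 0) && ((hp a c b l x)%:E == f x).
have Al0 : A l0 by rewrite /A cl0 hl0 eqxx.
have [l [/andP [cl /eqP hl] Hl]] := argmax_ex (P := A) (fun l => sl a c l i j) Al0.
have Hl' : forall l', c l' < 0 -> (hp a c b l' x)%:E = f x -> sl a c l' i j <= sl a c l i j.
  by move=> l' h1 h2; apply: Hl; rewrite /A h1 h2 eqxx.
exists l; split => //.
exact: (dv_fin Hn He Hd).
Qed.

Lemma D_lower {R : realType} {n m : nat} (f : ('I_n -> R) -> \bar R) a c b x0 :
  (forall x, f x != -oo%E) -> @erep R n m f a c b -> domR f x0 ->
  forall x (i j : 'I_n) l0, domR f x ->
  c l0 < 0 -> (hp a c b l0 x)%:E = f x ->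
  ((sl a c l0 i j)%:E <= dirder f x i j)%E.
Proof.
move=> Hn He Hd x i j l0 Hx cl0 hl0.
case: (pselect (exists l, c l = 0 /\ Ax a l x = b l /\ 0 < a l i - a l j)) => Hb.
  by rewrite (dv_blk Hn He Hd Hx Hb) leey.
have Hnb : forall l, c l = 0 -> Ax a l x = b l -> a l i - a l j <= 0.
  move=> l h1 h2; rewrite leNgt; apply/negP => h3; apply: Hb; by exists l.
have [l [_ _ Hl ->]] := D_exact Hn He Hd Hx Hnb cl0 hl0.
by rewrite lee_fin; apply: Hl.
Qed.


Lemma R_step {R : realType} {n m : nat} (f : ('I_n -> R) -> \bar R) a c b
  (y : 'I_n -> R) (i j k : 'I_n) lam :
  (forall x, f x != -oo%E) -> @erep R n m f a c b -> domR f y ->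
  Mex f -> i != j -> j != k -> i != k -> domR f (move y lam i k) ->
  forall t0, 0 <= t0 -> t0 < lam ->
  exists2 eta, 0 < eta & forall t, t0 < t -> t < t0 + eta -> t <= lam ->
    (dirder f (move y t0 i k) i j <= dirder f (move y t i k) i j)%E.
Proof.
move=> Hn He Hy Hex ij jk ik Hyl t0 t00 t0l.
set z0 := move y t0 i k.
have Hz0 : domR f z0 by apply: (z_dom Hn He Hy Hyl); rewrite t00 ltW.
have Axz : forall t l, Ax a l (move y t i k) = Ax a l z0 + (t - t0) * (a l i - a l k).
  by move=> t l; rewrite /z0 !Ax_move; ring.
have hpz : forall t l, hp a c b l (move y t i k) = hp a c b l z0 + (t - t0) * sl a c l i k.
  by move=> t l; rewrite /z0 !hp_move; ring.
have domt : forall t, t0 <= t -> t <= lam -> domR f (move y t i k).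
  by move=> t h1 h2; apply: (z_dom Hn He Hy Hyl); rewrite h2 andbT; lra.
have Tk : forall l, c l = 0 -> Ax a l z0 = b l -> a l i - a l k <= 0.
  move=> l cl tl; have := (dom_char Hn He Hy _).1 Hyl l cl.
  rewrite Axz tl => h; have : (lam - t0) * (a l i - a l k) <= 0 by lra.
  by rewrite pmulr_rle0 // subr_gt0.
case: (pselect (exists l, c l = 0 /\ Ax a l z0 = b l /\ 0 < a l i - a l j)) => Hb.
  case: (pselect (exists l, [/\ c l = 0, Ax a l z0 = b l, 0 < a l i - a l j &
     a l i - a l k = 0])) => Hb2.
    have [l [cl tl pl kl]] := Hb2.
    exists 1 => // t h1 _ h3.
    rewrite (@dv_blk _ _ _ f a c b y Hn He Hy (move y t i k) i j (domt t (ltW h1) h3)).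
      exact: leey.
    by exists l; rewrite Axz tl kl mulr0 addr0.
  exfalso; apply: (fail_dom Hn He Hy Hex ij jk ik Hz0 Tk Hb).
  move=> l cl tl pl; apply/negP => /eqP kl; apply: Hb2; by exists l.
have Hnb : forall l, c l = 0 -> Ax a l z0 = b l -> a l i - a l j <= 0.
  move=> l h1 h2; rewrite leNgt; apply/negP => h3; apply: Hb; by exists l.
have [l0 [cl0 hl0]] := fact_act Hn He Hy Hz0.
have [lg [clg hlg Hmg Dg]] := D_exact Hn He Hy Hz0 Hnb cl0 hl0.
pose A l := (c l < 0) && ((hp a c b l z0)%:E == f z0).
have Al0 : A l0 by rewrite /A cl0 hl0 eqxx.
have [ld [/andP [cld /eqP hld] Hld]] := argmax_ex (P := A) (fun l => sl a c l i k) Al0.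
case: (pselect (exists l, [/\ c l < 0, (hp a c b l z0)%:E = f z0,
   sl a c l i j = sl a c lg i j & sl a c l i k = sl a c ld i k])) => Hs; last first.
  exfalso; apply: (fail_piece Hn He Hy Hex ij jk ik Hz0 Tk Hnb clg hlg Hmg cld hld).
    by move=> l h1 h2; apply: Hld; rewrite /A h1 h2 eqxx.
  by move=> l h1 h2 h3 h4; apply: Hs; exists l.
have [ls [cls hls gls dls]] := Hs.
set r := hp a c b ls z0.
have Hr : f z0 = r%:E by rewrite -hls.
have [eta etap Hg] := gap (P := fun l => (c l < 0) && (hp a c b l z0 < r))
   (u := fun l => hp a c b l z0 - r) (fun l => sl a c l i k - sl a c ld i k)
   ltac:(move=> l /andP [_ h]; lra).
exists eta => // t h1 h2 h3.
have Hzt := domt t (ltW h1) h3.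
have hst : (hp a c b ls (move y t i k))%:E = f (move y t i k).
  apply/esym/(fval Hn He Hy (l0 := ls)) => //.
  - by move=> l cl; apply: (dom_char Hn He Hy _).1.
  - move=> l cl; rewrite (hpz t l) (hpz t ls).
    have := fge Hn He z0 cl; rewrite Hr lee_fin le_eqVlt => /orP [/eqP E|E].
      have := Hld l; rewrite /A cl E -Hr eqxx => /(_ isT) h.
      have : (t - t0) * sl a c l i k <= (t - t0) * sl a c ld i k.
        by apply: ler_wpM2l => //; lra.
      rewrite dls -/r => h'; lra.
    have := Hg (t - t0) ltac:(rewrite ger0_norm; lra) l; rewrite cl E => /(_ isT).
    rewrite dls -/r; lra.
rewrite Dg -gls; exact: (D_lower Hn He Hy i j Hzt cls hst).
Qed.


Lemma L_step {R : realType} {n m : nat} (f : ('I_n -> R) -> \bar R) a c b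
  (y : 'I_n -> R) (i j k : 'I_n) lam :
  (forall x, f x != -oo%E) -> @erep R n m f a c b -> domR f y ->
  domR f (move y lam i k) ->
  forall t0, 0 < t0 -> t0 <= lam ->
  exists2 eta, 0 < eta & forall t, t0 - eta < t -> t < t0 -> 0 <= t ->
    (dirder f (move y t i k) i j <= dirder f (move y t0 i k) i j)%E.
Proof.
move=> Hn He Hy Hyl t0 t00 t0l.
set z0 := move y t0 i k.
have Hz0 : domR f z0 by apply: (z_dom Hn He Hy Hyl); rewrite t0l ltW.
have Axz : forall t l, Ax a l (move y t i k) = Ax a l z0 + (t - t0) * (a l i - a l k).
  by move=> t l; rewrite /z0 !Ax_move; ring.
have hpz : forall t l, hp a c b l (move y t i k) = hp a c b l z0 + (t - t0) * sl a c l i k.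
  by move=> t l; rewrite /z0 !hp_move; ring.
case: (pselect (exists l, c l = 0 /\ Ax a l z0 = b l /\ 0 < a l i - a l j)) => Hb.
  exists 1 => // t _ _ _.
  by rewrite (@dv_blk _ _ _ f a c b y Hn He Hy z0 i j Hz0 Hb) leey.
have Hnb : forall l, c l = 0 -> Ax a l z0 = b l -> a l i - a l j <= 0.
  move=> l h1 h2; rewrite leNgt; apply/negP => h3; apply: Hb; by exists l.
have [l0 [cl0 hl0]] := fact_act Hn He Hy Hz0.
have [lg [clg hlg Hmg Dg]] := D_exact Hn He Hy Hz0 Hnb cl0 hl0.
set r := hp a c b lg z0.
have Hr : f z0 = r%:E by rewrite -hlg.
have [e1 e1p H1] := gap (P := fun l => (c l == 0) && (Ax a l z0 < b l))
   (u := fun l => Ax a l z0 - b l) (fun l => a l i - a l k)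
   ltac:(move=> l /andP [_ h]; lra).
have [e2 e2p H2] := gap (P := fun l => (c l < 0) && (hp a c b l z0 < r))
   (u := fun l => hp a c b l z0 - r) (fun l => sl a c l i k - sl a c lg i k)
   ltac:(move=> l /andP [_ h]; lra).
exists (Num.min e1 e2); first by rewrite lt_min e1p e2p.
move=> t h1 h2 h3.
have m1 : Num.min e1 e2 <= e1 by rewrite ge_min lexx.
have m2 : Num.min e1 e2 <= e2 by rewrite ge_min lexx orbT.
have n1 : `|t - t0| < e1 by rewrite ltr0_norm; lra.
have n2 : `|t - t0| < e2 by rewrite ltr0_norm; lra.
have Hzt : domR f (move y t i k) by apply: (z_dom Hn He Hy Hyl); rewrite h3; lra.
have Hnbt : forall l, c l = 0 -> Ax a l (move y t i k) = b l -> a l i - a l j <= 0.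
  move=> l cl; rewrite Axz => tl.
  have := (dom_char Hn He Hy z0).1 Hz0 l cl; rewrite le_eqVlt => /orP [/eqP E|E].
    exact: Hnb.
  have := H1 (t - t0) n1 l; rewrite cl eqxx E => /(_ isT) h; lra.
have [l1 [cl1 hl1]] := fact_act Hn He Hy Hzt.
have [lt [clt hlt _ ->]] := D_exact Hn He Hy Hzt Hnbt cl1 hl1.
rewrite Dg lee_fin; apply: Hmg => //.
rewrite Hr; congr (_%:E).
have := fge Hn He z0 clt; rewrite Hr lee_fin le_eqVlt => /orP [/eqP //|E].
exfalso.
have := H2 (t - t0) n2 lt; rewrite clt E => /(_ isT) h.
have := fge Hn He (move y t i k) clg; rewrite -hlt lee_fin (hpz t lg) (hpz t lt) -/r.
move=> h'; lra.
Qed.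


Lemma real_ind {R : realType} (D : R -> \bar R) (lam : R) : 0 < lam ->
  (forall t0, 0 <= t0 -> t0 < lam -> exists2 eta, 0 < eta &
     forall t, t0 < t -> t < t0 + eta -> t <= lam -> (D t0 <= D t)%E) ->
  (forall t0, 0 < t0 -> t0 <= lam -> exists2 eta, 0 < eta &
     forall t, t0 - eta < t -> t < t0 -> 0 <= t -> (D t <= D t0)%E) ->
  (D 0%R <= D lam)%E.
Proof.
move=> lp HR HL.
pose S := [set tau : R | 0 <= tau <= lam /\ forall u, 0 <= u <= tau -> (D 0%R <= D u)%E].
have S0 : S 0.
  split; first by rewrite lexx ltW.
  move=> u /andP [h1 h2]; have -> : u = 0 by apply/le_anti; rewrite h1 h2.
  exact: lexx.
have Sub : ubound S lam by move=> x [/andP [_ h] _].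
have hs : has_sup S by split; [exists 0 | exists lam].
set s := sup S.
have s0 : 0 <= s by apply: sup_upper_bound.
have sl : s <= lam by apply: ge_sup => //; exists 0.
have HA : forall u, 0 <= u -> u < s -> (D 0%R <= D u)%E.
  move=> u u0 us.
  have [tau [_ Ht] ht] := sup_adherent (eps := s - u) ltac:(by rewrite subr_gt0) hs; rewrite -/s in ht.
  apply: Ht; rewrite u0 /=; lra.
have HB : (D 0%R <= D s)%E.
  have := s0; rewrite le_eqVlt => /orP [/eqP <-|sp]; first exact: lexx.
  have [eta etap Heta] := HL s sp sl.
  pose u := Num.max (s / 2) (s - eta / 2).
  have u1 : s / 2 <= u by rewrite le_max lexx.
  have u2 : s - eta / 2 <= u by rewrite le_max lexx orbT.
  have u3 : u < s by rewrite gt_max; apply/andP; split; lra.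
  apply: le_trans (HA u _ u3) (Heta u _ u3 _); lra.
have Ss : S s.
  split; first by rewrite s0 sl.
  move=> u /andP [u0]; rewrite le_eqVlt => /orP [/eqP ->|us]; [exact: HB | exact: HA].
have := sl; rewrite le_eqVlt => /orP [/eqP <-|sl']; first by case: Ss => _; apply; rewrite s0 lexx.
exfalso.
have [eta etap Heta] := HR s s0 sl'.
pose tau := Num.min lam (s + eta / 2).
have t1 : tau <= lam by rewrite ge_min lexx.
have t2 : tau <= s + eta / 2 by rewrite ge_min lexx orbT.
have t3 : s < tau by rewrite lt_min; apply/andP; split; lra.
have St : S tau.
  split; first by apply/andP; split; lra.
  move=> u /andP [u0 ut]; case: (leP u s) => us.
    by case: Ss => _; apply; rewrite u0 us.
  apply: le_trans HB (Heta u us _ _); lra.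
have := sup_upper_bound hs St; rewrite -/s; lra.
Qed.

Unset Implicit Arguments.
Set Strict Implicit.

Theorem mainTheorem15 (R : realType) (n : nat) (f : ('I_n -> R) -> \bar R)
  (y : 'I_n -> R) (i j k : 'I_n) :
  Mconvex f -> bounded_dom f -> domR f y ->
  i != j -> j != k -> i != k ->
  forall lambda : R, 0 < lambda -> domR f (move y lambda i k) ->
    (dirder f y i j <= dirder f (move y lambda i k) i j)%E /\
    ((phiR f y < dirder f y i j)%E ->
       (phiR f y < dirder f (move y lambda i k) i j)%E).
Proof.
move=> [[Hn [[m [a [c [b He]]]] _]] Hex] _ Hy ij jk ik lam lp Hyl.
have Hmain : (dirder f y i j <= dirder f (move y lam i k) i j)%E.
  have H0 : move y 0 i k = y by apply/funext => l; rewrite /move mul0r addr0.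
  rewrite -{1}H0.
  apply: (real_ind (D := fun t => dirder f (move y t i k) i j)) => //.
  - move=> t0 h1 h2; exact: (R_step Hn He Hy Hex ij jk ik Hyl).
  - move=> t0 h1 h2; exact: (@L_step _ _ _ f a c b y i j k lam Hn He Hy Hyl).
split => // h; exact: lt_le_trans h Hmain.
Qed.
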